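(* A finite group $G$ is mixable if and only if every nontrivial irreducible complex representation of $G$ is mixable.
   Context: A finite group $G$ is mixable if there exist fixed elements $g_1,\dots,g_k\in G$ and independent Bernoulli random variables $\epsilon_i\sim\mathrm{Ber}(p_i)$, $p_i\in[0,1]$, such that $g_1^{\epsilon_1}\cdots g_k^{\epsilon_k}$ is distributed exactly uniformly on $G$. An irreducible representation $\rho: G\to\mathrm{GL}_d(\mathbb{C})$ is mixable if there exist $g_1,\dots,g_k\in G$ and $p_1,\dots,p_k\in[0,1]$ with $\prod_{i=1}^k\big((1-p_i)I+p_i\rho(g_i)\big)=0$. (Equivalently, the theorem says $G$ is mixable iff its regular representation is mixable, a representation being called mixable when all its nontrivial irreducible components are.) *)

(* Defs.v *)
From HB Require Import structures.
From mathcomp Require Import all_boot all_order all_algebra all_fingroup.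
From mathcomp Require Import mxrepresentation.
From mathcomp Require Import reals.
From mathcomp Require Import complex.
Set Implicit Arguments. Unset Strict Implicit. Unset Printing Implicit Defensive.
Import Order.TTheory GRing.Theory Num.Theory.
Local Open Scope ring_scope.

(* Probability that g_0^{e_0} * ... * g_{k-1}^{e_{k-1}} equals x, where the
   e_i ~ Ber(p_i) are independent. *)
Definition word_prob (R : realType) (gT : finGroupType) (k : nat)
    (g : 'I_k -> gT) (p : 'I_k -> R) (x : gT) : R :=
  \sum_(e : {ffun 'I_k -> bool} |
          (\prod_(i < k) (if e i then g i else 1))%g == x)
     \prod_(i < k) (if e i then p i else 1 - p i).

Definition group_mixable (R : realType) (gT : finGroupType) (G : {group gT}) :=
  exists (k : nat) (g : 'I_k -> gT) (p : 'I_k -> R),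
    [/\ forall i, g i \in G,
        forall i, 0 <= p i <= 1
      & forall x, x \in G -> word_prob g p x = #|G|%:R^-1].

Definition rep_mixable (R : realType) (gT : finGroupType) (G : {group gT})
    (n : nat) (rG : mx_representation R[i] G n) :=
  exists (k : nat) (g : 'I_k -> gT) (p : 'I_k -> R),
    [/\ forall i, g i \in G,
        forall i, 0 <= p i <= 1
      & \big[mulmx/1%:M]_(i < k)
           ((Complex (1 - p i) 0)%:M + Complex (p i) 0 *: rG (g i))
        = 0 :> 'M[R[i]]_n].

Definition rep_trivial (R : realType) (gT : finGroupType) (G : {group gT})
    (n : nat) (rG : mx_representation R[i] G n) :=
  forall x, x \in G -> rG x = 1%:M.

(* Main.v *)
Require Import Defs.
From HB Require Import structures.
From mathcomp Require Import all_boot all_order all_algebra all_fingroup.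
From mathcomp Require Import mxrepresentation.
From mathcomp Require Import reals.
From mathcomp Require Import complex.
From Stdlib Require Import Classical.
From mathcomp Require Import zify.
Set Implicit Arguments. Unset Strict Implicit. Unset Printing Implicit Defensive.
Import Order.TTheory GRing.Theory Num.Theory.
Local Open Scope ring_scope.

Lemma cadd (R : realType) (a b : R) : Complex a 0 + Complex b 0 = Complex (a + b) 0.
Proof. by change (real_complex R a + real_complex R b = real_complex R (a + b)); rewrite rmorphD. Qed.
Lemma cmul (R : realType) (a b : R) : Complex a 0 * Complex b 0 = Complex (a * b) 0.
Proof. by change (real_complex R a * real_complex R b = real_complex R (a * b)); rewrite rmorphM. Qed.
Lemma c1 (R : realType) : Complex (1 : R) 0 = 1.
Proof. by []. Qed.

Definition Wd (R : realType) (gT : finGroupType) (G : {group gT}) n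
  (rG : mx_representation R[i] G n) k (g : 'I_k -> gT) (p : 'I_k -> R) : 'M[R[i]]_n :=
  \big[mulmx/1%:M]_(i < k)
           ((Complex (1 - p i) 0)%:M + Complex (p i) 0 *: rG (g i)).

Definition killing (R : realType) (gT : finGroupType) (G : {group gT}) n
  (rG : mx_representation R[i] G n) (W : 'M[R[i]]_n) :=
  forall h, h \in G -> W *m rG h = W.

Lemma fix_fac (F : comUnitRingType) m n (Y : 'M[F]_(m, n)) (M : 'M[F]_n) a b :
  Y *m M = Y -> a + b = 1 -> Y *m (a%:M + b *: M) = Y.
Proof.
by move=> hY hab; rewrite mulmxDr mul_mx_scalar -scalemxAr hY -scalerDl hab scale1r.
Qed.

Lemma fixed_word (R : realType) (gT : finGroupType) (G : {group gT}) n
  (rG : mx_representation R[i] G n) m (Y : 'M[R[i]]_(m, n)) k (g : 'I_k -> gT) (p : 'I_k -> R) :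
  (forall h, h \in G -> Y *m rG h = Y) -> (forall i, g i \in G) ->
  Y *m Wd rG g p = Y.
Proof.
move=> fY gG; rewrite /Wd.
apply: (big_ind (fun M => Y *m M = Y)).
- by rewrite mulmx1.
- by move=> A B hA hB; rewrite mulmxA hA hB.
move=> i _; apply: fix_fac; first exact: fY.
by rewrite cadd subrK.
Qed.

Definition catf (T : Type) k1 k2 (f1 : 'I_k1 -> T) (f2 : 'I_k2 -> T) : 'I_(k1 + k2) -> T :=
  fun i => match split i with inl a => f1 a | inr b => f2 b end.

Lemma catf_l (T : Type) k1 k2 (f1 : 'I_k1 -> T) (f2 : 'I_k2 -> T) i :
  catf f1 f2 (lshift k2 i) = f1 i.
Proof. by rewrite /catf (unsplitK (inl i : 'I_k1 + 'I_k2)). Qed.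

Lemma catf_r (T : Type) k1 k2 (f1 : 'I_k1 -> T) (f2 : 'I_k2 -> T) i :
  catf f1 f2 (rshift k1 i) = f2 i.
Proof. by rewrite /catf (unsplitK (inr i : 'I_k1 + 'I_k2)). Qed.

Lemma Wd_cat (R : realType) (gT : finGroupType) (G : {group gT}) n
  (rG : mx_representation R[i] G n) k1 k2 (g1 : 'I_k1 -> gT) (p1 : 'I_k1 -> R)
  (g2 : 'I_k2 -> gT) (p2 : 'I_k2 -> R) :
  Wd rG (catf g1 g2) (catf p1 p2) = Wd rG g1 p1 *m Wd rG g2 p2.
Proof.
rewrite /Wd.
change ((\prod_(i < k1 + k2) ((Complex (1 - catf p1 p2 i) 0)%:M + Complex (catf p1 p2 i) 0 *: rG (catf g1 g2 i)) : 'M[R[i]]_n)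
  = (\prod_(i < k1) ((Complex (1 - p1 i) 0)%:M + Complex (p1 i) 0 *: rG (g1 i))) *
    (\prod_(i < k2) ((Complex (1 - p2 i) 0)%:M + Complex (p2 i) 0 *: rG (g2 i)))).
rewrite big_split_ord /=.
apply: congr2; apply: eq_bigr => i _.
  by rewrite !catf_l.
by rewrite !catf_r.
Qed.

Lemma catf_in (T : Type) (P : T -> Prop) k1 k2 (f1 : 'I_k1 -> T) (f2 : 'I_k2 -> T) :
  (forall i, P (f1 i)) -> (forall i, P (f2 i)) -> forall i, P (catf f1 f2 i).
Proof. by move=> h1 h2 i; rewrite /catf; case: split. Qed.

Lemma killing_prepend (R : realType) (gT : finGroupType) (G : {group gT}) n
  (rG : mx_representation R[i] G n) k1 k2 (g1 : 'I_k1 -> gT) (p1 : 'I_k1 -> R)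
  (g2 : 'I_k2 -> gT) (p2 : 'I_k2 -> R) :
  killing rG (Wd rG g2 p2) -> killing rG (Wd rG (catf g1 g2) (catf p1 p2)).
Proof. by move=> K h hG; rewrite Wd_cat -mulmxA K. Qed.

Lemma killing_append (R : realType) (gT : finGroupType) (G : {group gT}) n
  (rG : mx_representation R[i] G n) k1 k2 (g1 : 'I_k1 -> gT) (p1 : 'I_k1 -> R)
  (g2 : 'I_k2 -> gT) (p2 : 'I_k2 -> R) :
  (forall i, g2 i \in G) ->
  killing rG (Wd rG g1 p1) -> killing rG (Wd rG (catf g1 g2) (catf p1 p2)).
Proof.
move=> g2G K h hG.
have fW : forall x, x \in G -> Wd rG g1 p1 *m rG x = Wd rG g1 p1 by move=> x xG; apply: K.
by rewrite Wd_cat fixed_word // fW.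
Qed.
Lemma zero_from_split (F : fieldType) n (U W X : 'M[F]_n) :
  (U + W :=: 1%:M)%MS -> U *m X = 0 -> W *m X = 0 -> X = 0.
Proof.
move=> UW hU hW.
have : (1%:M <= U + W)%MS by rewrite UW submx_refl.
case/sub_addsmxP => [[u1 u2] /= e].
by rewrite -[X]mul1mx e mulmxDl -!mulmxA hU hW !mulmx0 addr0.
Qed.
Lemma rank_split (F : fieldType) n (U W : 'M[F]_n) :
  (U + W :=: 1%:M)%MS -> mxdirect (U + W) -> (\rank U + \rank W = n)%N.
Proof.
move=> UW /mxdirect_addsP dx.
by rewrite -mxrank_disjoint_sum // UW mxrank1.
Qed.

Lemma fac_sub (F : fieldType) (gT : finGroupType) (G : {group gT}) n
  (rG : mx_representation F G n) (U : 'M[F]_n) (Umod : mxmodule rG U) m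
  (v : 'M[F]_(m, \rank U)) (a b : F) x : x \in G ->
  val_submod (v *m (a%:M + b *: submod_repr Umod x)) = val_submod v *m (a%:M + b *: rG x).
Proof.
move=> xG.
rewrite !mulmxDr !mul_mx_scalar -!scalemxAr linearD /= !linearZ /=.
by rewrite val_submodJ.
Qed.

Lemma val_submod_Wd (R : realType) (gT : finGroupType) (G : {group gT}) n
  (rG : mx_representation R[i] G n) (U : 'M[R[i]]_n) (Umod : mxmodule rG U)
  k (g : 'I_k -> gT) (p : 'I_k -> R) : (forall i, g i \in G) ->
  forall m (v : 'M[R[i]]_(m, \rank U)),
  val_submod (v *m Wd (submod_repr Umod) g p) = val_submod v *m Wd rG g p.
Proof.
move=> gG; rewrite /Wd.
apply: (big_ind2 (fun A B => forall m (v : 'M[R[i]]_(m, \rank U)),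
   val_submod (v *m A) = val_submod v *m B)).
- by move=> m v; rewrite !mulmx1.
- by move=> A1 B1 A2 B2 h1 h2 m v; rewrite mulmxA h2 h1 mulmxA.
by move=> i _ m v; apply: fac_sub.
Qed.

Lemma transfer (R : realType) (gT : finGroupType) (G : {group gT}) n
  (rG : mx_representation R[i] G n) (U : 'M[R[i]]_n) (Umod : mxmodule rG U)
  k (g : 'I_k -> gT) (p : 'I_k -> R) : (forall i, g i \in G) ->
  killing (submod_repr Umod) (Wd (submod_repr Umod) g p) ->
  forall h, h \in G -> U *m Wd rG g p *m rG h = U *m Wd rG g p.
Proof.
move=> gG K h hG.
have eU : val_submod (in_submod U U) = U := in_submodK (submx_refl U).
rewrite -eU -val_submod_Wd // -val_submodJ //.
by rewrite -mulmxA (K h hG).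
Qed.


Lemma charG (R : realType) (gT : finGroupType) (G : {group gT}) :
  pgroup.pgroup [char R[i]]^' G.
Proof.
apply/pgroup.pgroupP => p pp _.
have := pchar_num (R[i]) => H; rewrite /negn /= inE /=. by rewrite H.
Qed.

Lemma mx0_eq (F : fieldType) n (A B : 'M[F]_n) : n = 0%N -> A = B.
Proof. by move=> e; move: A B; rewrite e => A B; rewrite [A]flatmx0 [B]flatmx0. Qed.

Lemma trivial_word (R : realType) (gT : finGroupType) (G : {group gT}) n
  (rG : mx_representation R[i] G n) :
  n = 0%N \/ rep_trivial rG ->
  exists k (g : 'I_k -> gT) (p : 'I_k -> R),
    [/\ forall i, g i \in G, forall i, 0 <= p i <= 1 & killing rG (Wd rG g p)].
Proof.
move=> H; exists 0%N, (fun _ => 1%g), (fun _ => 0); split => //.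
- by move=> i; rewrite lexx ler01.
move=> h hG; case: H => [n0|tr]; first exact: mx0_eq.
by rewrite tr // mulmx1.
Qed.

Lemma kill_exists (R : realType) (gT : finGroupType) (G : {group gT})
  (hyp : forall (n : nat) (rG : mx_representation R[i] G n),
      mx_irreducible rG -> ~ rep_trivial rG -> rep_mixable rG) :
  forall N n, (n <= N)%N -> forall (rG : mx_representation R[i] G n),
  exists k (g : 'I_k -> gT) (p : 'I_k -> R),
    [/\ forall i, g i \in G, forall i, 0 <= p i <= 1 & killing rG (Wd rG g p)].
Proof.
elim=> [|N IH] n leN rG.
  by apply: trivial_word; left; apply/eqP; rewrite -leqn0.
case: (eqVneq n 0%N) => [n0|nn0]; first by apply: trivial_word; left.
case: (classic (mx_irreducible rG)) => [irr|nirr].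
  case: (classic (rep_trivial rG)) => [tr|ntr]; first by apply: trivial_word; right.
  have [k [g [p [gG pB W0]]]] := hyp n rG irr ntr.
  exists k, g, p; split => // h _.
  by rewrite /Wd W0 mul0mx.
have [U [Umod Unz Unf]] : exists U : 'M[R[i]]_n, [/\ mxmodule rG U, U != 0 & ~~ row_full U].
  apply: NNPP => hne; apply: nirr; apply/mx_irrP; split; first by rewrite lt0n.
  move=> U Um Unz; apply/negPn/negP => nf; by apply: hne; exists U; split.
have [W Wmod UW dxUW] := mx_Maschke_pchar rG (charG R G) Umod (submx1 U).
have rUW := rank_split UW dxUW.
have rUlt : (\rank U < n)%N by rewrite ltn_neqAle rank_leq_col andbT.
have rU0 : (0 < \rank U)%N by rewrite lt0n mxrank_eq0.
have [kU [gU [pU [gUG pUB KU]]]] := IH (\rank U) (ltac:(lia)) (submod_repr Umod).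
have [kW [gW [pW [gWG pWB KW]]]] := IH (\rank W) (ltac:(lia)) (submod_repr Wmod).
have gG := catf_in (P := fun x => x \in G) gUG gWG.
exists (kU + kW)%N, (catf gU gW), (catf pU pW); split => //.
  exact: (catf_in (P := fun x => 0 <= x <= 1)).
move=> h hG.
have tU := transfer gG (killing_append pW gWG KU) hG.
have tW := transfer gG (killing_prepend gU pU KW) hG.
apply/eqP; rewrite -subr_eq0; apply/eqP.
apply: (zero_from_split UW).
  by rewrite mulmxBr mulmxA tU subrr.
by rewrite mulmxBr mulmxA tW subrr.
Qed.

Lemma prod_scale_rep (R : realType) (gT : finGroupType) (G : {group gT}) n
  (rG : mx_representation R[i] G n) k (c : 'I_k -> R) (h : 'I_k -> gT) :
  (forall i, h i \in G) ->
  \prod_(i < k) (Complex (c i) 0 *: rG (h i)) =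
  Complex (\prod_(i < k) c i) 0 *: rG (\prod_(i < k) h i)%g.
Proof.
elim: k c h => [|k IH] c h hG.
  rewrite !big_ord0 repr_mx1 (c1 R) scale1r //.
rewrite !big_ord_recr /= IH; last by move=> i; apply: hG.
change ((Complex (\prod_(i < k) c (widen_ord (leqnSn k) i)) 0 *: rG (\prod_(i < k) h (widen_ord (leqnSn k) i))%g)
   *m (Complex (c ord_max) 0 *: rG (h ord_max)) =
   Complex (\prod_(i < k) c (widen_ord (leqnSn k) i) * c ord_max) 0 *:
   rG ((\prod_(i < k) h (widen_ord (leqnSn k) i)) * h ord_max)%g).
rewrite -scalemxAl -scalemxAr scalerA cmul repr_mxM //.
by apply: group_prod => i _; apply: hG.
Qed.

Lemma Wd_expand (R : realType) (gT : finGroupType) (G : {group gT}) n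
  (rG : mx_representation R[i] G n) k (g : 'I_k -> gT) (p : 'I_k -> R) :
  (forall i, g i \in G) ->
  Wd rG g p = \sum_(e : {ffun 'I_k -> bool})
     Complex (\prod_(i < k) (if e i then p i else 1 - p i)) 0 *:
        rG (\prod_(i < k) (if e i then g i else 1))%g.
Proof.
move=> gG.
have fac : forall i, (Complex (1 - p i) 0)%:M + Complex (p i) 0 *: rG (g i) =
   \sum_(b : bool) (Complex (if b then p i else 1 - p i) 0 *: rG (if b then g i else 1%g)).
  by move=> i; rewrite big_bool /= repr_mx1 addrC scalemx1.
rewrite /Wd.
change ((\prod_(i < k) ((Complex (1 - p i) 0)%:M + Complex (p i) 0 *: rG (g i)) : 'M[R[i]]_n) =
  \sum_(e : {ffun 'I_k -> bool})
     Complex (\prod_(i < k) (if e i then p i else 1 - p i)) 0 *: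
        rG (\prod_(i < k) (if e i then g i else 1))%g).
rewrite (eq_bigr _ (fun i _ => fac i)) bigA_distr_bigA /=.
apply: eq_bigr => e _.
apply: prod_scale_rep => i; case: (e i) => //; exact: group1.
Qed.

Lemma prod_in (gT : finGroupType) (G : {group gT}) k (g : 'I_k -> gT)
  (gG : forall i, g i \in G) (e : {ffun 'I_k -> bool}) :
  (\prod_(i < k) (if e i then g i else 1))%g \in G.
Proof. by apply: group_prod => i _; case: (e i) => //; exact: group1. Qed.

Lemma Wd_expand2 (R : realType) (gT : finGroupType) (G : {group gT}) n
  (rG : mx_representation R[i] G n) k (g : 'I_k -> gT) (p : 'I_k -> R) :
  (forall i, g i \in G) ->
  Wd rG g p = \sum_(x in G) Complex (word_prob g p x) 0 *: rG x.
Proof.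
move=> gG; rewrite Wd_expand //.
rewrite (partition_big (fun e : {ffun 'I_k -> bool} => (\prod_(i < k) (if e i then g i else 1))%g)
   (fun x => x \in G)) /=; last by move=> e _; apply: prod_in.
apply: eq_bigr => x xG.
rewrite (eq_bigr (fun e : {ffun 'I_k -> bool} =>
   Complex (\prod_(i < k) (if e i then p i else 1 - p i)) 0 *: rG x)); last first.
  by move=> e /eqP ->.
rewrite -scaler_suml /word_prob; congr (_ *: _).
change (\sum_(e : {ffun 'I_k -> bool} | (\prod_(i < k) (if e i then g i else 1))%g == x)
   real_complex R (\prod_(i < k) (if e i then p i else 1 - p i)) =
   real_complex R (\sum_(e : {ffun 'I_k -> bool} | (\prod_(i < k) (if e i then g i else 1))%g == x)
      (\prod_(i < k) (if e i then p i else 1 - p i)))).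
by rewrite rmorph_sum.
Qed.

Lemma word_prob_sum (R : realType) (gT : finGroupType) (G : {group gT})
  k (g : 'I_k -> gT) (p : 'I_k -> R) :
  (forall i, g i \in G) -> \sum_(x in G) word_prob g p x = 1.
Proof.
move=> gG.
have : \prod_(i < k) \sum_(b : bool) (if b then p i else 1 - p i) = 1.
  by rewrite big1 // => i _; rewrite big_bool /= addrC subrK.
rewrite bigA_distr_bigA /= => <-.
rewrite (partition_big (fun e : {ffun 'I_k -> bool} => (\prod_(i < k) (if e i then g i else 1))%g)
   (fun x => x \in G)) /=; last by move=> e _; apply: prod_in.
by [].
Qed.

Definition regmx (R : realType) (gT : finGroupType) (x : gT) : 'M[R[i]]_#|gT| :=
  \matrix_(i, j) ((enum_val j == (enum_val i * x)%g)%:R).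

Lemma regmx_repr (R : realType) (gT : finGroupType) (G : {group gT}) :
  mx_repr G (@regmx R gT).
Proof.
split.
  apply/matrixP => i j; rewrite !mxE mulg1 (inj_eq enum_val_inj) eq_sym.
  by case: (i == j).
move=> x y _ _; apply/matrixP => i j.
rewrite !mxE (bigD1 (enum_rank (enum_val i * x)%g)) //= !mxE enum_rankK eqxx mul1r.
rewrite big1 ?addr0; first by rewrite mulgA.
move=> l nl; rewrite !mxE.
case: eqP => [el|]; last by rewrite mul0r.
by rewrite -el enum_valK eqxx in nl.
Qed.

Definition regrep (R : realType) (gT : finGroupType) (G : {group gT}) :
  mx_representation R[i] G #|gT| := MxRepresentation (regmx_repr R G).

Lemma sum_pick (F : pzRingType) (gT : finGroupType) (G : {group gT}) (a : gT -> F) z :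
  z \in G -> \sum_(x in G) a x * ((x == z)%:R) = a z.
Proof.
move=> zG; rewrite (bigD1 z) //= eqxx mulr1 big1 ?addr0 //.
by move=> x /andP[_ /negbTE ->]; rewrite mulr0.
Qed.

Lemma reg_entry (R : realType) (gT : finGroupType) (G : {group gT}) (c : gT -> R) h :
  h \in G ->
  ((\sum_(x in G) Complex (c x) 0 *: regrep R G x) *m regrep R G h)
     (enum_rank (1%g : gT)) (enum_rank (1%g : gT)) = Complex (c h^-1%g) 0.
Proof.
move=> hG.
rewrite mulmx_suml.
rewrite (eq_bigr (fun x => Complex (c x) 0 *: regrep R G (x * h)%g)); last first.
  by move=> x xG; rewrite -scalemxAl repr_mxM.
rewrite summxE.
rewrite (eq_bigr (fun x => Complex (c x) 0 * ((x == h^-1)%g)%:R)); last first.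
  move=> x xG; rewrite mxE /= /regmx mxE enum_rankK mul1g.
  by rewrite eq_sym [in RHS]eq_mulgV1 invgK.
by rewrite sum_pick // groupV.
Qed.

Lemma reg_entry1 (R : realType) (gT : finGroupType) (G : {group gT}) (c : gT -> R) :
  (\sum_(x in G) Complex (c x) 0 *: regrep R G x)
     (enum_rank (1%g : gT)) (enum_rank (1%g : gT)) = Complex (c 1%g) 0.
Proof.
rewrite summxE.
rewrite (eq_bigr (fun x => Complex (c x) 0 * ((x == 1)%g)%:R)); last first.
  move=> x xG; rewrite mxE /= /regmx mxE enum_rankK mul1g.
  by rewrite eq_sym.
by rewrite sum_pick // group1.
Qed.

Theorem mainTheorem12 (R : realType) (gT : finGroupType) (G : {group gT}) :
  group_mixable R G <->
  (forall (n : nat) (rG : mx_representation R[i] G n),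
      mx_irreducible rG -> ~ rep_trivial rG -> rep_mixable rG).
Proof.
split.
  move=> [k [g [p [gG pB U]]]] n rG irr ntr.
  exists k, g, p; split => //.
  change (Wd rG g p = 0).
  rewrite Wd_expand2 //.
  rewrite (eq_bigr (fun x => Complex (#|G|%:R^-1) 0 *: rG x)); last first.
    by move=> x xG; rewrite U.
  rewrite -scaler_sumr.
  set S := \sum_(x in G) rG x.
  have SJ : forall h, h \in G -> S *m rG h = S.
    move=> h hG; rewrite /S mulmx_suml.
    rewrite (eq_bigr (fun x => rG (x * h)%g)); last by move=> x xG; rewrite repr_mxM.
    rewrite [RHS](reindex_inj (mulIg h)) /=.
    by apply: eq_bigl => x; rewrite groupMr.
  case: (eqVneq S 0) => [->|Snz]; first by rewrite scaler0.
  exfalso; apply: ntr => h hG.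
  have Smod : mxmodule rG S.
    by apply/mxmoduleP => x xG; rewrite SJ.
  have Sfull := (proj2 ((mx_irrP rG).1 irr)) S Smod Snz.
  have Su : S \in unitmx by rewrite -row_full_unit.
  by rewrite -[rG h](mulKmx Su) SJ // mulVmx.
move=> hyp.
have [k [g [p [gG pB K]]]] := kill_exists hyp (leqnn _) (regrep R G).
exists k, g, p; split => // x xG.
set c := word_prob g p.
have ch : forall h, h \in G -> c h^-1%g = c 1%g.
  move=> h hG.
  have := congr1 (fun M : 'M[R[i]]_#|gT| => M (enum_rank (1%g : gT)) (enum_rank (1%g : gT))) (K h hG).
  rewrite Wd_expand2 // reg_entry // reg_entry1.
  by case.
have cx : forall y, y \in G -> c y = c 1%g.
  by move=> y yG; rewrite -[y]invgK ch // groupV.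
have hs := word_prob_sum p gG.
rewrite (eq_bigr (fun _ => c 1%g)) in hs; last by move=> y yG; apply: cx.
rewrite sumr_const -mulr_natr in hs.
have nz : #|G|%:R != 0 :> R by rewrite pnatr_eq0 -lt0n cardG_gt0.
rewrite (cx x xG).
by apply: (mulIf nz); rewrite hs mulVf.
Qed.
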